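(* Consider the delay differential system \[ \begin{aligned} \dot T(t)&= s-dT(t)+aT(t)\Big(1-\frac{T(t)+I(t)}{T_{\max}}\Big)-\frac{bT(t)V(t)}{1+\alpha V(t)},\\ \dot I(t)&= \frac{bT(t-\tau)V(t-\tau)}{1+\alpha V(t-\tau)}+aI(t)\Big(1-\frac{T(t)+I(t)}{T_{\max}}\Big)-\mu I(t),\\ \dot V(t)&= pI(t)-cV(t), \end{aligned} \] with positive constants $s,d,a,T_{\max},b,\alpha,\mu,p,c$ and $\tau\ge0$. Let \[ T_0=\frac{T_{\max}}{2a}\Big(a-d+\sqrt{(a-d)^2+\tfrac{4as}{T_{\max}}}\Big),\qquad R_0=\frac{1}{\mu}\Big[\frac{bpT_0}{c}+a\Big(1-\frac{T_0}{T_{\max}}\Big)\Big]. \] Assume $d=\mu$ and $R_0>1$. Then the infected equilibrium $E_2=(T_2,I_2,V_2)$ (the unique equilibrium with all components positive) is globally asymptotically stable (with respect to solutions with positive initial data) for any $\tau\ge0$. *)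

(* Defs.v *)
From Stdlib Require Import Reals Lra.
From Coquelicot Require Import Coquelicot.
Open Scope R_scope.

Definition fT (s d a Tmax b alpha : R) (T I V : R) : R :=
  s - d * T + a * T * (1 - (T + I) / Tmax) - b * T * V / (1 + alpha * V).

(* Right-hand side of the I-equation; Td, Vd are the delayed values T(t-tau), V(t-tau). *)
Definition fI (a Tmax b alpha mu : R) (Td Vd T I : R) : R :=
  b * Td * Vd / (1 + alpha * Vd) + a * I * (1 - (T + I) / Tmax) - mu * I.

Definition fV (p c : R) (I V : R) : R := p * I - c * V.

Definition T0 (s d a Tmax : R) : R :=
  Tmax / (2 * a) * (a - d + sqrt ((a - d) ^ 2 + 4 * a * s / Tmax)).

Definition basic_R0 (s d a Tmax b mu p c : R) : R :=
  / mu * (b * p * T0 s d a Tmax / c + a * (1 - T0 s d a Tmax / Tmax)).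

Definition is_equilibrium (s d a Tmax b alpha mu p c : R) (T I V : R) : Prop :=
  fT s d a Tmax b alpha T I V = 0 /\
  fI a Tmax b alpha mu T V T I = 0 /\
  fV p c I V = 0.

(* The functions are total on R; only their values on [-tau, +oo) matter.
   Continuity everywhere is harmless (any continuous function on [-tau,+oo)
   extends continuously to R). The equations hold for every t > 0. *)
Definition is_solution (s d a Tmax b alpha mu p c tau : R) (T I V : R -> R) : Prop :=
  (forall t, continuous T t /\ continuous I t /\ continuous V t) /\
  (forall t, 0 < t ->
     is_derive T t (fT s d a Tmax b alpha (T t) (I t) (V t)) /\
     is_derive I t (fI a Tmax b alpha mu (T (t - tau)) (V (t - tau)) (T t) (I t)) /\
     is_derive V t (fV p c (I t) (V t))).

Definition positive_initial_data (tau : R) (T I V : R -> R) : Prop :=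
  forall th, - tau <= th <= 0 -> 0 < T th /\ 0 < I th /\ 0 < V th.

Definition dist3 (x1 y1 z1 x2 y2 z2 : R) : R :=
  Rmax (Rabs (x1 - x2)) (Rmax (Rabs (y1 - y2)) (Rabs (z1 - z2))).

(* Lyapunov stability of (T2,I2,V2) w.r.t. solutions with positive initial data,
   phase space C([-tau,0], R^3) with the sup norm. *)
Definition locally_stable (s d a Tmax b alpha mu p c tau : R) (T2 I2 V2 : R) : Prop :=
  forall eps, 0 < eps -> exists delta, 0 < delta /\
    forall T I V : R -> R,
      is_solution s d a Tmax b alpha mu p c tau T I V ->
      positive_initial_data tau T I V ->
      (forall th, - tau <= th <= 0 -> dist3 (T th) (I th) (V th) T2 I2 V2 < delta) ->
      forall t, 0 <= t -> dist3 (T t) (I t) (V t) T2 I2 V2 < eps.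

Definition globally_attractive (s d a Tmax b alpha mu p c tau : R) (T2 I2 V2 : R) : Prop :=
  forall T I V : R -> R,
    is_solution s d a Tmax b alpha mu p c tau T I V ->
    positive_initial_data tau T I V ->
    is_lim T p_infty T2 /\ is_lim I p_infty I2 /\ is_lim V p_infty V2.

Definition globally_asymptotically_stable (s d a Tmax b alpha mu p c tau : R)
  (T2 I2 V2 : R) : Prop :=
  locally_stable s d a Tmax b alpha mu p c tau T2 I2 V2 /\
  globally_attractive s d a Tmax b alpha mu p c tau T2 I2 V2.

(* Main.v *)
Require Import Defs.
From Stdlib Require Import Reals.
From Coquelicot Require Import Coquelicot.
From Stdlib Require Import Reals Lra Psatz Classical.
From Coquelicot Require Import Coquelicot.
Open Scope R_scope.

Lemma ln_le_sub1 x : 0 < x -> ln x <= x - 1.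
Proof.
  intros hx. destruct (Req_dec (ln x) 0) as [h|h].
  - rewrite h. assert (x = 1). { rewrite <- (exp_ln x hx), h. apply exp_0. } lra.
  - pose proof (exp_ineq1 _ h). rewrite exp_ln in H; lra.
Qed.

Lemma ln_lt_sub1 x : 0 < x -> x <> 1 -> ln x < x - 1.
Proof.
  intros hx h1. assert (ln x <> 0).
  { intro h. apply h1. rewrite <- (exp_ln x hx), h. apply exp_0. }
  pose proof (exp_ineq1 _ H). rewrite exp_ln in H0; lra.
Qed.

Lemma ln_ge_1m x : 0 < x -> 1 - / x <= ln x.
Proof.
  intros hx. pose proof (ln_le_sub1 (/ x) (Rinv_0_lt_compat _ hx)).
  rewrite ln_Rinv in H by lra. lra.
Qed.

Lemma ln_le_half x : 0 < x -> ln x <= x / 2.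
Proof.
  intros hx. set (r := sqrt x).
  assert (hr : 0 < r) by (apply sqrt_lt_R0; lra).
  assert (hrr : r * r = x) by (apply sqrt_sqrt; lra).
  assert (ln x = 2 * ln r). { rewrite <- hrr, ln_mult by lra. ring. }
  pose proof (ln_le_sub1 r hr).
  assert (x/2 - 2*(r-1) = (r-2)*(r-2)/2) by (rewrite <- hrr; field).
  pose proof (Rle_0_sqr (r-2)). unfold Rsqr in *. lra.
Qed.

Definition phi (z : R) : R := z - 1 - ln z.

Lemma phi_ge0 z : 0 < z -> 0 <= phi z.
Proof. intros; unfold phi; pose proof (ln_le_sub1 z H); lra. Qed.

Lemma phi_le z : 0 < z -> phi z <= (z - 1)^2 / z.
Proof.
  intros hz. unfold phi. pose proof (ln_ge_1m z hz).
  assert ((z-1)^2/z = z - 2 + /z) by (field; lra). lra.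
Qed.

Lemma phi_mono_r y z : 1 <= y -> y <= z -> phi y <= phi z.
Proof.
  intros h1 h2. unfold phi.
  assert (ln z - ln y <= z / y - 1).
  { rewrite <- ln_div by lra. apply ln_le_sub1. apply Rdiv_lt_0_compat; lra. }
  assert (z / y - 1 <= z - y).
  { assert (z/y - 1 = (z - y)/y) by (field; lra). rewrite H0.
    apply Rmult_le_reg_r with y. lra. unfold Rdiv. rewrite Rmult_assoc, Rinv_l by lra. nra. }
  lra.
Qed.

Lemma phi_mono_l y z : 0 < z -> z <= y -> y <= 1 -> phi y <= phi z.
Proof.
  intros h0 h1 h2. unfold phi.
  assert (1 - z / y <= ln y - ln z).
  { rewrite <- ln_div by lra. pose proof (ln_ge_1m (y / z) ltac:(apply Rdiv_lt_0_compat; lra)).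
    replace (/ (y / z)) with (z / y) in H by (field; lra). lra. }
  assert (y - z <= 1 - z / y).
  { assert (1 - z / y = (y - z)/y) by (field; lra). rewrite H0.
    apply Rmult_le_reg_r with y. lra. unfold Rdiv. rewrite Rmult_assoc, Rinv_l by lra. nra. }
  lra.
Qed.

Lemma phi_pos z : 0 < z -> z <> 1 -> 0 < phi z.
Proof. intros; unfold phi; pose proof (ln_lt_sub1 z H H0); lra. Qed.

Lemma phi_far r : 0 < r < 1 -> exists m, 0 < m /\
  forall z, 0 < z -> r <= Rabs (z - 1) -> m <= phi z.
Proof.
  intros hr. exists (Rmin (phi (1 + r)) (phi (1 - r))). split.
  - apply Rmin_glb_lt; apply phi_pos; lra.
  - intros z hz hzr. destruct (Rle_lt_dec 1 z).
    + rewrite Rabs_right in hzr by lra. eapply Rle_trans. apply Rmin_l.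
      apply phi_mono_r; lra.
    + rewrite Rabs_left in hzr by lra. eapply Rle_trans. apply Rmin_r.
      apply phi_mono_l; lra.
Qed.

Definition hh (x2 x : R) : R := x - x2 - x2 * (ln x - ln x2).

Lemma hh_phi x2 x : 0 < x2 -> 0 < x -> hh x2 x = x2 * phi (x / x2).
Proof. intros. unfold hh, phi. rewrite ln_div by lra. field. lra. Qed.

Lemma hh_ge0 x2 x : 0 < x2 -> 0 < x -> 0 <= hh x2 x.
Proof. intros. rewrite hh_phi by auto. apply Rmult_le_pos. lra. apply phi_ge0.
  apply Rdiv_lt_0_compat; lra. Qed.

Lemma hh_upper x2 x C : 0 < x2 -> 0 < x -> hh x2 x <= C -> x <= 2 * (C + x2).
Proof.
  intros h2 hx hC. unfold hh in hC. rewrite <- ln_div in hC by lra.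
  pose proof (ln_le_half (x / x2) ltac:(apply Rdiv_lt_0_compat; lra)).
  assert (x2 * ln (x/x2) <= x/2). { replace (x/2) with (x2 * ((x/x2)/2)) by (field; lra). nra. }
  lra.
Qed.

Lemma hh_lower x2 x C : 0 < x2 -> 0 < x -> hh x2 x <= C -> x2 * exp (- ((C + x2) / x2)) <= x.
Proof.
  intros h2 hx hC. unfold hh in hC. rewrite <- ln_div in hC by lra.
  assert (- ((C + x2) / x2) <= ln (x / x2)).
  { assert (x2 * ln (x/x2) >= - (C + x2)) by lra.
    apply Rmult_le_reg_l with x2; auto. replace (x2 * - ((C + x2) / x2)) with (- (C + x2)) by (field; lra). lra. }
  assert (exp (- ((C + x2) / x2)) <= x / x2).
  { rewrite <- (exp_ln (x/x2)) by (apply Rdiv_lt_0_compat; lra).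
    destruct H as [H|H]. left; apply exp_increasing; auto. rewrite H; lra. }
  apply Rmult_le_compat_l with (r := x2) in H0; [|lra].
  replace (x2 * (x / x2)) with x in H0 by (field; lra). lra.
Qed.

Lemma exp_pos' y : 0 < exp y.
Proof. apply exp_pos. Qed.
Lemma cont_eps f x : continuous f x -> forall eps, 0 < eps ->
  exists del, 0 < del /\ forall y, Rabs (y - x) < del -> Rabs (f y - f x) < eps.
Proof.
  intros hc eps he.
  assert (hp : continuity_pt f x) by (apply continuity_pt_filterlim; exact hc).
  rewrite continuity_pt_locally in hp.
  destruct (hp (mkposreal eps he)) as [del hd].
  exists del. split. apply cond_pos. intros y hy. apply hd. exact hy.
Qed.

Lemma cont_pos_nbhd f x : continuous f x -> 0 < f x ->
  exists del, 0 < del /\ forall y, Rabs (y - x) < del -> 0 < f y.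
Proof.
  intros hc hp. destruct (cont_eps f x hc (f x) hp) as [del [hd H]].
  exists del. split; auto. intros y hy. specialize (H y hy).
  apply Rabs_lt_between in H. lra.
Qed.

Lemma cont_left_ge f x m : continuous f x -> 0 < x ->
  (forall y, 0 <= y < x -> m <= f y) -> m <= f x.
Proof.
  intros hc hx H. destruct (Rle_lt_dec m (f x)) as [h|h]; auto.
  destruct (cont_eps f x hc (m - f x)) as [del [hd Hd]]. lra.
  set (y := x - Rmin del x / 2).
  assert (0 < Rmin del x) by (apply Rmin_glb_lt; lra).
  assert (Rmin del x <= del) by apply Rmin_l. assert (Rmin del x <= x) by apply Rmin_r.
  specialize (H y ltac:(unfold y; lra)).
  specialize (Hd y ltac:(unfold y; rewrite Rabs_left; lra)).
  apply Rabs_lt_between in Hd. lra.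
Qed.

Lemma hh_close x2 eps : 0 < x2 -> 0 < eps -> exists eta, 0 < eta /\
  forall x, 0 < x -> hh x2 x < eta -> Rabs (x - x2) < eps.
Proof.
  intros h2 he. set (r := Rmin (eps / x2) (1/2)).
  assert (hr : 0 < r < 1).
  { unfold r. split. apply Rmin_glb_lt. apply Rdiv_lt_0_compat; lra. lra.
    eapply Rle_lt_trans. apply Rmin_r. lra. }
  destruct (phi_far r hr) as [m [hm Hm]].
  exists (x2 * m). split. nra.
  intros x hx hlt. destruct (Rlt_le_dec (Rabs (x - x2)) eps) as [h|h]; auto.
  exfalso.
  assert (r <= Rabs (x / x2 - 1)).
  { replace (x / x2 - 1) with ((x - x2) / x2) by (field; lra).
    unfold Rdiv. rewrite Rabs_mult, Rabs_inv, (Rabs_right x2) by lra.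
    apply Rle_trans with (eps / x2). apply Rmin_l.
    unfold Rdiv. apply Rmult_le_compat_r. left; apply Rinv_0_lt_compat; lra. lra. }
  specialize (Hm (x / x2) ltac:(apply Rdiv_lt_0_compat; lra) H).
  rewrite hh_phi in hlt by lra. nra.
Qed.

Lemma hh_small x2 x : 0 < x2 -> Rabs (x - x2) <= x2 / 2 -> hh x2 x <= 2 * (x - x2)^2 / x2.
Proof.
  intros h2 hx. apply Rabs_le_between in hx.
  assert (0 < x) by lra.
  rewrite hh_phi by lra.
  pose proof (phi_le (x / x2) ltac:(apply Rdiv_lt_0_compat; lra)).
  assert (x2 * ((x / x2 - 1) ^ 2 / (x / x2)) = (x - x2)^2 / x) by (field; lra).
  assert ((x - x2)^2 / x <= 2 * (x - x2)^2 / x2).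
  { unfold Rdiv. apply Rmult_le_reg_r with (x * x2). nra.
    replace ((x - x2) ^ 2 * / x * (x * x2)) with ((x-x2)^2 * x2) by (field; lra).
    replace (2 * (x - x2) ^ 2 * / x2 * (x * x2)) with (2 * (x-x2)^2 * x) by (field; lra).
    pose proof (pow2_ge_0 (x - x2)). nra. }
  nra.
Qed.

Lemma barbalat (L X : R -> R) t0 X2 B kap :
  0 < B -> 0 < kap ->
  (forall t, t0 <= t -> 0 <= L t) ->
  (forall u v, t0 <= u <= v -> exists c, u <= c <= v /\ L v <= L u - (v - u) * kap * (X c - X2)^2) ->
  (forall u v, t0 <= u -> t0 <= v -> Rabs (X v - X u) <= B * Rabs (v - u)) ->
  forall eps, 0 < eps -> exists M, forall t, M <= t -> Rabs (X t - X2) < eps.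
Proof.
  intros hB hk hL hdec hlip eps he.
  apply NNPP. intro hne.
  assert (hbad : forall M, exists t, M <= t /\ eps <= Rabs (X t - X2)).
  { intro M. apply NNPP. intro h. apply hne. exists M. intros t ht.
    apply Rnot_le_lt. intro h'. apply h. exists t. auto. }
  set (del := eps / (2 * B)).
  assert (hdel : 0 < del) by (unfold del; apply Rdiv_lt_0_compat; lra).
  set (D := del * kap * (eps / 2)^2).
  assert (hD : 0 < D) by (unfold D; apply Rmult_lt_0_compat; [apply Rmult_lt_0_compat; lra| apply pow_lt; lra]).
  assert (step : forall t, t0 <= t -> exists t', t <= t' /\ L t' <= L t - D).
  { intros t ht. destruct (hbad t) as [t1 [ht1 hb]].
    exists (t1 + del). split. lra.
    destruct (hdec t t1 ltac:(lra)) as [c1 [hc1 hL1]].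
    assert (L t1 <= L t). { assert (0 <= (t1 - t) * kap * (X c1 - X2)^2) by
        (apply Rmult_le_pos; [apply Rmult_le_pos|apply pow2_ge_0]; lra). lra. }
    destruct (hdec t1 (t1 + del) ltac:(lra)) as [c [hc hL2]].
    assert (HB1 : Rabs (X c - X t1) <= B * del).
    { eapply Rle_trans. apply hlip; lra. apply Rmult_le_compat_l. lra.
      rewrite Rabs_right by lra. lra. }
    assert (HB2 : B * del = eps / 2) by (unfold del; field; lra).
    assert (eps / 2 <= Rabs (X c - X2)).
    { pose proof (Rabs_triang (X t1 - X c) (X c - X2)) as Ht.
      replace (X t1 - X c + (X c - X2)) with (X t1 - X2) in Ht by ring.
      rewrite (Rabs_minus_sym (X t1) (X c)) in Ht. lra. }
    assert ((eps/2)^2 <= (X c - X2)^2).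
    { rewrite <- (pow2_abs (X c - X2)). apply pow_incr. lra. }
    unfold D. replace (t1 + del - t1) with del in hL2 by ring.
    assert (del * kap * (eps / 2) ^ 2 <= del * kap * (X c - X2) ^ 2).
    { apply Rmult_le_compat_l. apply Rmult_le_pos; lra. auto. }
    lra. }
  assert (hind : forall n : nat, exists t, t0 <= t /\ L t <= L t0 - INR n * D).
  { induction n. exists t0. split. lra. simpl. lra.
    destruct IHn as [t [ht hLt]]. destruct (step t ht) as [t' [ht' hL']].
    exists t'. split. lra. rewrite S_INR. lra. }
  destruct (INR_archimed D (L t0) hD) as [n hn].
  destruct (hind n) as [t [ht hLt]]. specialize (hL t ht). lra.
Qed.
Ltac pos := repeat (first [lra | apply Rmult_lt_0_compat | apply Rdiv_lt_0_compat | apply Rinv_0_lt_compat | apply Rplus_lt_0_compat]); try nra.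

Lemma key_rat (d a K al p T2 I2 V2 T I V Td Vd s b c : R) :
  0<T->0<I->0<V->0<Td->0<Vd->0<T2->0<I2->0<V2->0<K->0<al->0<p->
  0 < d - a*(1-(T2+I2)/K) ->
  s = (d - a*(1-(T2+I2)/K))*(T2+I2) ->
  b = (d - a*(1-(T2+I2)/K))*I2*(1+al*V2)/(T2*V2) ->
  c = p*I2/V2 ->
  (1 - T2/T)*(s - d*T + a*T*(1-(T+I)/K) - b*T*V/(1+al*V))
  + (1 - I2/I)*(b*Td*Vd/(1+al*Vd) + a*I*(1-(T+I)/K) - d*I)
  + ((b*T2*V2/(1+al*V2))/(p*I2))*(1 - V2/V)*(p*I - c*V)
  + (b*T2*V2/(1+al*V2))*((b*T*V/(1+al*V))/(b*T2*V2/(1+al*V2)) - 1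
       - ((b*Td*Vd/(1+al*Vd))/(b*T2*V2/(1+al*V2)) - 1)
       + (T2/T-1)+((b*Td*Vd/(1+al*Vd))/(b*T2*V2/(1+al*V2))*I2/I-1)
       + (I*V2/(I2*V)-1)+(V*(V2/(1+al*V2))/(V2*(V/(1+al*V)))-1))
  = -(s/(T*(T2+I2)))*(T-T2)^2 - (a/K)*(T+I-T2-I2)^2
    - (b*T2*V2/(1+al*V2))*al*(V-V2)^2/(V2*(1+al*V)*(1+al*V2)).
Proof.
  intros. subst s b c.
  assert (d*K - a*(K-(T2+I2)) = (d - a*(1-(T2+I2)/K))*K) by (field; lra).
  field.
  repeat split; try lra; try nra.
Qed.

Lemma key_ineq (d a K al p T2 I2 V2 T I V Td Vd s b c : R) :
  0<T->0<I->0<V->0<Td->0<Vd->0<T2->0<I2->0<V2->0<K->0<al->0<p->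
  0 < d - a*(1-(T2+I2)/K) ->
  s = (d - a*(1-(T2+I2)/K))*(T2+I2) ->
  b = (d - a*(1-(T2+I2)/K))*I2*(1+al*V2)/(T2*V2) ->
  c = p*I2/V2 ->
  (1 - T2/T)*(s - d*T + a*T*(1-(T+I)/K) - b*T*V/(1+al*V))
  + (1 - I2/I)*(b*Td*Vd/(1+al*Vd) + a*I*(1-(T+I)/K) - d*I)
  + ((b*T2*V2/(1+al*V2))/(p*I2))*(1 - V2/V)*(p*I - c*V)
  + (b*T2*V2/(1+al*V2))*(phi ((b*T*V/(1+al*V))/(b*T2*V2/(1+al*V2)))
       - phi ((b*Td*Vd/(1+al*Vd))/(b*T2*V2/(1+al*V2))))
  <= -(s/(T*(T2+I2)))*(T-T2)^2 - (a/K)*(T+I-T2-I2)^2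
    - (b*T2*V2/(1+al*V2))*al*(V-V2)^2/(V2*(1+al*V)*(1+al*V2)).
Proof.
  intros hT hI hV hTd hVd hT2 hI2 hV2 hK hal hp hq hs hb hc.
  rewrite <- (key_rat d a K al p T2 I2 V2 T I V Td Vd s b c) by auto.
  assert (hb0 : 0 < b).
  { rewrite hb. pos. }
  set (B2 := b*T2*V2/(1+al*V2)).
  assert (hB2 : 0 < B2) by (unfold B2; pos).
  set (xw := (b*T*V/(1+al*V))/B2).
  set (xd := (b*Td*Vd/(1+al*Vd))/B2).
  assert (hxw : 0 < xw) by (unfold xw; pos).
  assert (hxd : 0 < xd) by (unfold xd; pos).
  set (p1 := T2/T). set (p2 := xd*I2/I). set (p3 := I*V2/(I2*V)).
  set (p4 := V*(V2/(1+al*V2))/(V2*(V/(1+al*V)))).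
  assert (h1 : 0 < p1) by (unfold p1; apply Rdiv_lt_0_compat; lra).
  assert (h2 : 0 < p2) by (unfold p2; pos).
  assert (h3 : 0 < p3) by (unfold p3; pos).
  assert (h4 : 0 < p4).
  { unfold p4. pos. }
  assert (hprod : xd / xw = p1 * p2 * p3 * p4).
  { unfold p1, p2, p3, p4, xd, xw, B2. field. repeat split; try lra; try nra. }
  assert (hln : ln xd - ln xw = ln p1 + ln p2 + ln p3 + ln p4).
  { rewrite <- ln_div by auto. rewrite hprod.
    rewrite !ln_mult by pos. ring. }
  pose proof (ln_le_sub1 p1 h1). pose proof (ln_le_sub1 p2 h2).
  pose proof (ln_le_sub1 p3 h3). pose proof (ln_le_sub1 p4 h4).
  unfold phi.
  assert (B2 * (xw - 1 - ln xw - (xd - 1 - ln xd)) <=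
          B2 * (xw - 1 - (xd - 1) + (p1 - 1) + (p2 - 1) + (p3 - 1) + (p4 - 1))).
  { apply Rmult_le_compat_l. lra. lra. }
  lra.
Qed.

Lemma T0_props s d a K : 0 < s -> 0 < a -> 0 < K ->
  0 < T0 s d a K /\ s - d * T0 s d a K + a * T0 s d a K * (1 - T0 s d a K / K) = 0.
Proof.
  intros hs ha hK. unfold T0.
  set (D := (a - d) ^ 2 + 4 * a * s / K).
  assert (hD : (a-d)^2 < D). { unfold D. assert (0 < 4*a*s/K) by pos. lra. }
  set (S := sqrt D).
  assert (hS : S * S = D) by (apply sqrt_sqrt; pose proof (pow2_ge_0 (a-d)); lra).
  assert (hS0 : 0 <= S) by apply sqrt_pos.
  assert (hSad : a - d < S /\ -(a-d) < S).
  { split; apply Rnot_le_lt; intro hc; assert (S * S <= (a-d)^2) by nra; lra. }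
  split.
  - apply Rmult_lt_0_compat. pos. lra.
  - unfold D in hS. field_simplify; [|lra]. 
    replace (S ^ 2) with (S * S) by ring. rewrite hS. field. lra.
Qed.

Lemma T0_unique s d a K N : 0 < s -> 0 < a -> 0 < K -> 0 < N ->
  s - d * N + a * N * (1 - N / K) = 0 -> N = T0 s d a K.
Proof.
  intros hs ha hK hN hq. unfold T0.
  set (D := (a - d) ^ 2 + 4 * a * s / K).
  assert (hD : (a-d)^2 < D). { unfold D. assert (0 < 4*a*s/K) by pos. lra. }
  set (S := sqrt D).
  assert (hS : S * S = D) by (apply sqrt_sqrt; pose proof (pow2_ge_0 (a-d)); lra).
  assert (hS0 : 0 <= S) by apply sqrt_pos.
  assert (hSad : a - d < S /\ -(a-d) < S).
  { split; apply Rnot_le_lt; intro hc; assert (S * S <= (a-d)^2) by nra; lra. }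
  set (r1 := K / (2 * a) * (a - d + S)).
  set (r2 := K / (2 * a) * (a - d - S)).
  assert (hr2 : r2 < 0). { unfold r2. assert (0 < K/(2*a)) by pos. nra. }
  assert (hfac : (N - r1) * (N - r2) = - (K / a) * (s - d * N + a * N * (1 - N / K))).
  { unfold r1, r2. unfold D in hS. field_simplify; [|lra|lra].
    replace (S ^ 2) with (S * S) by ring. rewrite hS. field. lra. }
  rewrite hq in hfac. replace (- (K / a) * 0) with 0 in hfac by ring.
  apply Rmult_integral in hfac. destruct hfac; lra.
Qed.
Lemma cont_ln x : 0 < x -> continuous ln x.
Proof. intros. assert (ex_derive ln x) by (eexists; apply is_derive_ln; auto).
  pose proof (ex_derive_continuous (V := R_NormedModule) ln x H0). exact H1. Qed.

Lemma cont_phi_comp (f : R -> R) x : continuous f x -> 0 < f x ->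
  continuous (fun y => phi (f y)) x.
Proof.
  intros hf hp. unfold phi.
  apply (continuous_minus (fun y => f y - 1) (fun y => ln (f y))).
  apply (continuous_minus f (fun _ => 1)). auto. apply continuous_const.
  apply continuous_comp. auto. apply cont_ln. auto.
Qed.

Lemma Rmax_formula (y m : R) : (y + m + Rabs (y - m)) / 2 = Rmax y m.
Proof. unfold Rmax. destruct (Rle_dec y m).
  + rewrite Rabs_left1 by lra. field.
  + rewrite Rabs_right by lra. field.
Qed.

Lemma cont_Rmax_c m x : continuous (fun y => Rmax y m) x.
Proof.
  apply (continuous_ext (fun y => (y + m + Rabs (y - m)) / 2)).
  - intros y. apply Rmax_formula.
  - unfold Rdiv. apply (continuous_mult (fun y => y + m + Rabs (y - m)) (fun _ => / 2)).
    apply (continuous_plus (fun y => y + m) (fun y => Rabs (y - m))).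
    apply (continuous_plus (fun y => y) (fun _ => m)). apply continuous_id. apply continuous_const.
    apply continuous_Rabs_comp. apply (continuous_minus (fun y => y) (fun _ => m)).
    apply continuous_id. apply continuous_const. apply continuous_const.
Qed.

Lemma cont_frac4 (b al : R) (T V : R -> R) x : continuous T x -> continuous V x ->
  1 + al * V x <> 0 -> continuous (fun y => b * T y * V y / (1 + al * V y)) x.
Proof.
  intros hT hV hn. unfold Rdiv.
  apply (continuous_mult (fun y => b * T y * V y) (fun y => / (1 + al * V y))).
  apply (continuous_mult (fun y => b * T y) V); auto.
  apply (continuous_mult (fun _ => b) T); auto. apply continuous_const.
  apply continuous_Rinv_comp; auto.
  apply (continuous_plus (fun _ => 1) (fun y => al * V y)). apply continuous_const.
  apply (continuous_mult (fun _ => al) V); auto. apply continuous_const.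
Qed.

Lemma hh_deriv x2 (f : R -> R) t df : 0 < f t -> is_derive f t df ->
  is_derive (fun y => hh x2 (f y)) t ((1 - x2 / f t) * df).
Proof.
  intros hp hf.
  assert (h : is_derive (hh x2) (f t) (1 - x2 / f t)).
  { unfold hh. auto_derive. lra. field. lra. }
  pose proof (is_derive_comp (hh x2) f t _ _ h hf).
  replace ((1 - x2 / f t) * df) with (scal df (1 - x2 / f t)). exact H.
  unfold scal; simpl; unfold mult; simpl. ring.
Qed.
Lemma num_bound A B C x y del : 0 <= A -> 0 <= B -> 0 <= C -> del <= 1 ->
  Rabs x <= del -> Rabs y <= del -> Rabs (A * x + B * y + C * (x * y)) <= (A + B + C) * del.
Proof.
  intros hA hB hC h1 hx hy.
  assert (hxy : Rabs (x * y) <= del).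
  { rewrite Rabs_mult. pose proof (Rabs_pos x). pose proof (Rabs_pos y).
    apply Rle_trans with (del * 1). apply Rmult_le_compat; lra. lra. }
  eapply Rle_trans. apply Rabs_triang. eapply Rle_trans. apply Rplus_le_compat_r. apply Rabs_triang.
  rewrite !Rabs_mult, (Rabs_right A), (Rabs_right B), (Rabs_right C) by lra.
  assert (A * Rabs x <= A * del) by (apply Rmult_le_compat_l; lra).
  assert (B * Rabs y <= B * del) by (apply Rmult_le_compat_l; lra).
  assert (C * Rabs (x * y) <= C * del) by (apply Rmult_le_compat_l; lra).
  rewrite Rabs_mult in H1. lra.
Qed.

Lemma rho_bound b al T2 V2 T V del : 0 < b -> 0 < al -> 0 < T2 -> 0 < V2 -> 0 < V -> del <= 1 ->
  Rabs (T - T2) <= del -> Rabs (V - V2) <= del ->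
  Rabs ((b * T * V / (1 + al * V)) / (b * T2 * V2 / (1 + al * V2)) - 1)
    <= ((1 + al * V2) * V2 + T2 + (1 + al * V2)) / (T2 * V2) * del.
Proof.
  intros hb hal hT2 hV2 hV h1 hx hy.
  set (e1 := T - T2). set (e2 := V - V2).
  assert (heq : (b * T * V / (1 + al * V)) / (b * T2 * V2 / (1 + al * V2)) - 1 =
     ((1 + al * V2) * V2 * e1 + T2 * e2 + (1 + al * V2) * (e1 * e2)) / (T2 * V2 * (1 + al * V))).
  { unfold e1, e2. field. repeat split; try lra; pos. }
  rewrite heq. unfold Rdiv. rewrite Rabs_mult, Rabs_inv, (Rabs_right (T2 * V2 * (1 + al * V))) by (left; pos).
  pose proof (num_bound ((1 + al * V2) * V2) T2 (1 + al * V2) e1 e2 del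
    ltac:(left; pos) ltac:(lra) ltac:(left; pos) h1 hx hy).
  assert (/ (T2 * V2 * (1 + al * V)) <= / (T2 * V2)).
  { apply Rinv_le_contravar. pos. rewrite <- (Rmult_1_r (T2 * V2)) at 1.
    apply Rmult_le_compat_l. left; pos. nra. }
  assert (0 <= / (T2 * V2 * (1 + al * V))) by (left; pos).
  pose proof (Rabs_pos ((1 + al * V2) * V2 * e1 + T2 * e2 + (1 + al * V2) * (e1 * e2))).
  apply Rle_trans with (((1 + al * V2) * V2 + T2 + (1 + al * V2)) * del * / (T2 * V2)).
  - apply Rle_trans with (((1 + al * V2) * V2 + T2 + (1 + al * V2)) * del * / (T2 * V2 * (1 + al * V))).
    apply Rmult_le_compat_r; lra. apply Rmult_le_compat_l; auto.
    apply Rle_trans with (Rabs ((1 + al * V2) * V2 * e1 + T2 * e2 + (1 + al * V2) * (e1 * e2))); auto.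
  - right. field. lra.
Qed.
Section Sol.
Variables s d a K b al p c tau : R.
Hypotheses (hs : 0 < s) (hd : 0 < d) (ha : 0 < a) (hK : 0 < K) (hb : 0 < b)
  (hal : 0 < al) (hp : 0 < p) (hc : 0 < c) (htau : 0 <= tau).
Variables T2 I2 V2 : R.
Hypotheses (hT2 : 0 < T2) (hI2 : 0 < I2) (hV2 : 0 < V2).
Hypothesis hq : 0 < d - a*(1-(T2+I2)/K).
Hypothesis hsE : s = (d - a*(1-(T2+I2)/K))*(T2+I2).
Hypothesis hbE : b = (d - a*(1-(T2+I2)/K))*I2*(1+al*V2)/(T2*V2).
Hypothesis hcE : c = p*I2/V2.
Variables T I V : R -> R.
Hypothesis hsol : is_solution s d a K b al d p c tau T I V.
Hypothesis hini : positive_initial_data tau T I V.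

Definition B2 := b*T2*V2/(1+al*V2).
Definition beta (t : R) := b*T t*V t/(1+al*V t).
Definition gg t := phi (beta (Rmax t (-tau)) / B2).
Definition GG t := RInt gg (-tau) t.
Definition LL t := hh T2 (T t) + hh I2 (I t) + (B2/(p*I2)) * hh V2 (V t)
  + B2 * (GG t - GG (t - tau)).
Definition Pos t1 := forall th, -tau <= th <= t1 -> 0 < T th /\ 0 < I th /\ 0 < V th.
Definition QQ t := (s/(T t*(T2+I2)))*(T t-T2)^2 + (a/K)*(T t+I t-T2-I2)^2
  + B2*al*(V t-V2)^2/(V2*(1+al*V t)*(1+al*V2)).
Definition Ld w := (1 - T2/T w)*fT s d a K b al (T w) (I w) (V w)
  + (1 - I2/I w)*fI a K b al d (T (w-tau)) (V (w-tau)) (T w) (I w)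
  + (B2/(p*I2))*((1 - V2/V w)*fV p c (I w) (V w))
  + B2*(gg w - gg (w - tau)).

Lemma B2_pos : 0 < B2.
Proof. unfold B2. pos. Qed.

Lemma cT t : continuous T t. Proof. apply hsol. Qed.
Lemma cI t : continuous I t. Proof. apply hsol. Qed.
Lemma cV t : continuous V t. Proof. apply hsol. Qed.

Lemma beta_pos t : 0 < T t -> 0 < V t -> 0 < beta t.
Proof. intros. unfold beta. pos. Qed.

Lemma gg_cont t1 y : Pos t1 -> -tau <= t1 -> y <= t1 -> continuous gg y.
Proof.
  intros hP ht1 hy. unfold gg.
  apply (continuous_comp (fun z => Rmax z (-tau)) (fun z => phi (beta z / B2))).
  apply cont_Rmax_c.
  set (z := Rmax y (-tau)).
  assert (hz : -tau <= z <= t1). { unfold z, Rmax. destruct (Rle_dec y (-tau)); lra. }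
  destruct (hP z hz) as [h1 [h2 h3]].
  apply (cont_phi_comp (fun z0 => beta z0 / B2)).
  - unfold Rdiv. apply (continuous_mult beta (fun _ => / B2)).
    apply cont_frac4. apply cT. apply cV. nra. apply continuous_const.
  - pose proof B2_pos. pose proof (beta_pos z h1 h3). pos.
Qed.

Lemma gg_nonneg t1 y : Pos t1 -> -tau <= t1 -> y <= t1 -> 0 <= gg y.
Proof.
  intros hP ht1 hy. unfold gg.
  set (z := Rmax y (-tau)).
  assert (hz : -tau <= z <= t1). { unfold z, Rmax. destruct (Rle_dec y (-tau)); lra. }
  destruct (hP z hz) as [h1 [h2 h3]].
  apply phi_ge0. pose proof B2_pos. pose proof (beta_pos z h1 h3). pos.
Qed.

Lemma gg_eq y : -tau <= y -> gg y = phi (beta y / B2).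
Proof. intros. unfold gg. rewrite Rmax_left by lra. auto. Qed.

Lemma ex_RInt_gg t1 u v : Pos t1 -> -tau <= t1 -> u <= t1 -> v <= t1 -> ex_RInt gg u v.
Proof.
  intros hP ht1 hu hv. apply (ex_RInt_continuous (V := R_CompleteNormedModule)). intros z hz.
  apply (gg_cont t1); auto.
  assert (Rmax u v <= t1) by (apply Rmax_lub; auto). lra.
Qed.

Lemma GG_deriv t1 y : Pos t1 -> -tau <= t1 -> y < t1 -> is_derive GG y (gg y).
Proof.
  intros hP ht1 hy. unfold GG.
  apply (is_derive_RInt (V := R_CompleteNormedModule) gg (fun t => RInt gg (-tau) t) (-tau) y).
  - assert (he : 0 < t1 - y) by lra.
    exists (mkposreal _ he). intros z hz.
    apply (RInt_correct (V := R_CompleteNormedModule)). apply (ex_RInt_gg t1); auto.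
    change (Rabs (z - y) < t1 - y) in hz. apply Rabs_lt_between in hz. lra.
  - apply (gg_cont t1); auto; lra.
Qed.

Lemma GG_cpt t1 y : Pos t1 -> -tau <= t1 -> y < t1 -> continuity_pt GG y.
Proof.
  intros. apply continuity_pt_filterlim.
  apply (ex_derive_continuous (V := R_NormedModule) GG y).
  eexists. apply (GG_deriv t1); auto.
Qed.
Lemma GG_shift_deriv t1 w : Pos t1 -> -tau <= t1 -> w < t1 ->
  is_derive (fun t => GG t - GG (t - tau)) w (gg w - gg (w - tau)).
Proof.
  intros hP ht1 hw.
  assert (h1 : is_derive GG w (gg w)) by (apply (GG_deriv t1); auto).
  assert (h2 : is_derive (fun t => GG (t - tau)) w (gg (w - tau))).
  { assert (hm : is_derive (fun t : R => t - tau) w 1) by (auto_derive; auto; ring).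
    pose proof (is_derive_comp GG (fun t => t - tau) w _ _ 
      ltac:(apply (GG_deriv t1); auto; lra) hm).
    replace (gg (w - tau)) with (scal 1 (gg (w - tau))). exact H.
    unfold scal; simpl; unfold mult; simpl. ring. }
  apply (is_derive_minus GG (fun t => GG (t - tau))); auto.
Qed.

Lemma LL_deriv t1 w : Pos t1 -> 0 < w < t1 -> is_derive LL w (Ld w).
Proof.
  intros hP hw.
  destruct (proj2 hsol w (proj1 hw)) as [dT [dI dV]].
  destruct (hP w ltac:(lra)) as [pT [pI pV]].
  pose proof (hh_deriv T2 T w _ pT dT) as e1.
  pose proof (hh_deriv I2 I w _ pI dI) as e2.
  pose proof (is_derive_scal _ w (B2/(p*I2)) _ (hh_deriv V2 V w _ pV dV)) as e3.
  pose proof (is_derive_scal _ w B2 _ (GG_shift_deriv t1 w hP ltac:(lra) ltac:(lra))) as e4.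
  unfold LL, Ld.
  apply (is_derive_plus (fun t => hh T2 (T t) + hh I2 (I t) + B2 / (p * I2) * hh V2 (V t))
     (fun t => B2 * (GG t - GG (t - tau)))); auto.
  apply (is_derive_plus (fun t => hh T2 (T t) + hh I2 (I t))
     (fun t => B2 / (p * I2) * hh V2 (V t))); auto.
  apply (is_derive_plus (fun t => hh T2 (T t)) (fun t => hh I2 (I t))); auto.
Qed.

Lemma LL_cpt t1 w : Pos t1 -> 0 <= w < t1 -> continuity_pt LL w.
Proof.
  intros hP hw.
  destruct (hP w ltac:(lra)) as [pT [pI pV]].
  apply continuity_pt_filterlim.
  assert (hcc : forall (f : R -> R) x2, continuous f w -> 0 < f w -> 0 < x2 ->
     continuous (fun t => hh x2 (f t)) w).
  { intros f x2 hf hfp hx2. unfold hh.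
    apply (continuous_minus (fun t => f t - x2) (fun t => x2 * (ln (f t) - ln x2))).
    apply (continuous_minus f (fun _ => x2)); auto. apply continuous_const.
    apply (continuous_mult (fun _ => x2) (fun t => ln (f t) - ln x2)). apply continuous_const.
    apply (continuous_minus (fun t => ln (f t)) (fun _ => ln x2)).
    apply continuous_comp; auto. apply cont_ln; auto. apply continuous_const. }
  assert (hG : continuous (fun t => GG t - GG (t - tau)) w).
  { apply (ex_derive_continuous (V := R_NormedModule)). eexists.
    apply (GG_shift_deriv t1); auto; lra. }
  unfold LL.
  apply (continuous_plus (fun t => hh T2 (T t) + hh I2 (I t) + B2 / (p * I2) * hh V2 (V t))
     (fun t => B2 * (GG t - GG (t - tau)))).
  apply (continuous_plus (fun t => hh T2 (T t) + hh I2 (I t))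
     (fun t => B2 / (p * I2) * hh V2 (V t))).
  apply (continuous_plus (fun t => hh T2 (T t)) (fun t => hh I2 (I t))).
  apply hcc; auto. apply cT. apply hcc; auto. apply cI.
  apply (continuous_mult (fun _ => B2 / (p * I2)) (fun t => hh V2 (V t))). apply continuous_const.
  apply hcc; auto. apply cV.
  apply (continuous_mult (fun _ => B2) (fun t => GG t - GG (t - tau))). apply continuous_const.
  auto.
Qed.

Lemma Ld_le t1 w : Pos t1 -> 0 <= w <= t1 -> Ld w <= - QQ w.
Proof.
  intros hP hw.
  destruct (hP w ltac:(lra)) as [pT [pI pV]].
  destruct (hP (w - tau) ltac:(lra)) as [pTd [pId pVd]].
  unfold Ld, QQ. rewrite !gg_eq by lra. unfold beta, B2, fT, fI, fV.
  pose proof (key_ineq d a K al p T2 I2 V2 (T w) (I w) (V w) (T (w - tau)) (V (w - tau)) s b c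
     pT pI pV pTd pVd hT2 hI2 hV2 hK hal hp hq hsE hbE hcE).
  lra.
Qed.

Lemma QQ_nonneg t1 w : Pos t1 -> 0 <= w <= t1 -> 0 <= QQ w.
Proof.
  intros hP hw. destruct (hP w ltac:(lra)) as [pT [pI pV]].
  pose proof B2_pos. unfold QQ.
  assert (0 <= s / (T w * (T2 + I2)) * (T w - T2) ^ 2).
  { apply Rmult_le_pos. left; pos. apply pow2_ge_0. }
  assert (0 <= a / K * (T w + I w - T2 - I2) ^ 2).
  { apply Rmult_le_pos. left; pos. apply pow2_ge_0. }
  assert (0 <= B2 * al * (V w - V2) ^ 2 / (V2 * (1 + al * V w) * (1 + al * V2))).
  { unfold Rdiv. apply Rmult_le_pos. apply Rmult_le_pos. left; pos. apply pow2_ge_0.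
    left. pos. }
  lra.
Qed.

Lemma LL_dec t1 u v : Pos t1 -> 0 <= u -> u <= v -> v < t1 ->
  exists c0, u <= c0 <= v /\ LL v <= LL u - (v - u) * QQ c0.
Proof.
  intros hP hu huv hv.
  destruct (MVT_gen LL u v Ld) as [c0 [hc0 hmvt]].
  - intros x hx. rewrite Rmin_left, Rmax_right in hx by lra.
    apply (LL_deriv t1); auto; lra.
  - intros x hx. rewrite Rmin_left, Rmax_right in hx by lra.
    apply (LL_cpt t1); auto; lra.
  - rewrite Rmin_left, Rmax_right in hc0 by lra.
    exists c0. split; auto.
    pose proof (Ld_le t1 c0 hP ltac:(lra)).
    assert (Ld c0 * (v - u) <= - QQ c0 * (v - u)) by (apply Rmult_le_compat_r; lra).
    lra.
Qed.

Lemma W_nonneg t1 t : Pos t1 -> 0 <= t <= t1 -> 0 <= GG t - GG (t - tau).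
Proof.
  intros hP ht. unfold GG.
  assert (ht1 : -tau <= t1) by lra.
  rewrite <- (RInt_Chasles (V := R_CompleteNormedModule) gg (-tau) (t - tau) t).
  - change (plus ?x ?y) with (x + y). 
    assert (0 <= RInt gg (t - tau) t).
    { apply RInt_ge_0. lra. apply (ex_RInt_gg t1); auto; lra.
      intros x hx. apply (gg_nonneg t1); auto; lra. }
    lra.
  - apply (ex_RInt_gg t1); auto; lra.
  - apply (ex_RInt_gg t1); auto; lra.
Qed.

Lemma LL_bounds t1 t : Pos t1 -> 0 <= t <= t1 ->
  hh T2 (T t) <= LL t /\ hh I2 (I t) <= LL t /\ (B2/(p*I2)) * hh V2 (V t) <= LL t /\ 0 <= LL t.
Proof.
  intros hP ht. destruct (hP t ltac:(lra)) as [pT [pI pV]].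
  pose proof (W_nonneg t1 t hP ht). pose proof B2_pos.
  pose proof (hh_ge0 T2 (T t) hT2 pT). pose proof (hh_ge0 I2 (I t) hI2 pI).
  pose proof (hh_ge0 V2 (V t) hV2 pV).
  assert (0 <= B2 / (p * I2) * hh V2 (V t)) by (apply Rmult_le_pos; [left; pos | auto]).
  assert (0 <= B2 * (GG t - GG (t - tau))) by (apply Rmult_le_pos; lra).
  unfold LL. lra.
Qed.
Lemma Pos_mono t t' : Pos t -> t' <= t -> Pos t'.
Proof. intros hP h th hth. apply hP. lra. Qed.

Lemma Pos0 : Pos 0.
Proof. intros th hth. apply hini. auto. Qed.

Lemma LL_le0 t1 t : Pos t1 -> 0 <= t < t1 -> LL t <= LL 0.
Proof.
  intros hP ht. destruct (LL_dec t1 0 t hP ltac:(lra) ltac:(lra) ltac:(lra)) as [c0 [hc0 h]].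
  pose proof (QQ_nonneg t1 c0 hP ltac:(lra)).
  assert (0 <= (t - 0) * QQ c0) by (apply Rmult_le_pos; lra). lra.
Qed.

Lemma positivity : forall t1, 0 <= t1 -> Pos t1.
Proof.
  set (A := fun t => 0 <= t /\ Pos t).
  destruct (classic (forall M, exists t, A t /\ M <= t)) as [hunb|hb0].
  { intros t1 ht1. destruct (hunb t1) as [t [[_ hP] ht]]. apply (Pos_mono t); auto. }
  exfalso.
  assert (hbd : exists M, forall t, A t -> t <= M).
  { apply NNPP. intro hn. apply hb0. intro M. apply NNPP. intro hm. apply hn.
    exists M. intros t hA. apply Rnot_lt_le. intro hlt. apply hm. exists t. split; auto; lra. }
  destruct hbd as [M hM].
  destruct (completeness A) as [ts [hub hleast]].
  { exists M. intros t ht. apply hM; auto. }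
  { exists 0. split. lra. apply Pos0. }
  assert (hts0 : 0 <= ts) by (apply hub; split; [lra | apply Pos0]).
  assert (hbelow : forall t1, t1 < ts -> Pos t1).
  { intros t1 ht1. apply NNPP. intro hn.
    assert (is_upper_bound A t1).
    { intros t [ht hP]. apply Rnot_lt_le. intro hlt. apply hn. apply (Pos_mono t); auto; lra. }
    specialize (hleast t1 H). lra. }
  set (C0 := LL 0).
  assert (hLL : forall t, 0 <= t < ts -> LL t <= C0).
  { intros t ht. apply (LL_le0 ((t + ts)/2)). apply hbelow; lra. lra. }
  pose proof B2_pos as hB2.
  set (kV := B2 / (p * I2)).
  assert (hkV : 0 < kV) by (unfold kV; pos).
  assert (hbT : forall t, 0 <= t < ts -> T2 * exp (- ((C0 + T2) / T2)) <= T t).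
  { intros t ht. assert (hP : Pos ((t + ts)/2)) by (apply hbelow; lra).
    destruct (hP t ltac:(lra)) as [pT _].
    destruct (LL_bounds _ t hP ltac:(lra)) as [h1 _].
    apply hh_lower; auto. pose proof (hLL t ht). lra. }
  assert (hbI : forall t, 0 <= t < ts -> I2 * exp (- ((C0 + I2) / I2)) <= I t).
  { intros t ht. assert (hP : Pos ((t + ts)/2)) by (apply hbelow; lra).
    destruct (hP t ltac:(lra)) as [_ [pI _]].
    destruct (LL_bounds _ t hP ltac:(lra)) as [_ [h1 _]].
    apply hh_lower; auto. pose proof (hLL t ht). lra. }
  assert (hbV : forall t, 0 <= t < ts -> V2 * exp (- ((C0 / kV + V2) / V2)) <= V t).
  { intros t ht. assert (hP : Pos ((t + ts)/2)) by (apply hbelow; lra).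
    destruct (hP t ltac:(lra)) as [_ [_ pV]].
    destruct (LL_bounds _ t hP ltac:(lra)) as [_ [_ [h1 _]]].
    apply hh_lower; auto. pose proof (hLL t ht).
    apply Rmult_le_reg_l with kV; auto. replace (kV * (C0 / kV)) with C0 by (field; lra).
    fold kV in h1. lra. }
  assert (hPts : Pos ts).
  { intros th hth. destruct (Rlt_le_dec th ts) as [hlt|hge].
    - apply (hbelow ((th + ts)/2)). lra. lra.
    - assert (th = ts) by lra. subst th.
      destruct (Req_dec ts 0) as [h0|h0].
      + rewrite h0. apply Pos0. lra.
      + assert (hts : 0 < ts) by lra.
        pose proof (exp_pos (- ((C0 + T2) / T2))). pose proof (exp_pos (- ((C0 + I2) / I2))).
        pose proof (exp_pos (- ((C0 / kV + V2) / V2))).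
        split; [|split].
        * eapply Rlt_le_trans; [|apply (cont_left_ge T ts); [apply cT | auto | exact hbT]]. pos.
        * eapply Rlt_le_trans; [|apply (cont_left_ge I ts); [apply cI | auto | exact hbI]]. pos.
        * eapply Rlt_le_trans; [|apply (cont_left_ge V ts); [apply cV | auto | exact hbV]]. pos. }
  destruct (hPts ts ltac:(lra)) as [pT [pI pV]].
  destruct (cont_pos_nbhd T ts (cT ts) pT) as [d1 [hd1 H1]].
  destruct (cont_pos_nbhd I ts (cI ts) pI) as [d2 [hd2 H2]].
  destruct (cont_pos_nbhd V ts (cV ts) pV) as [d3 [hd3 H3]].
  set (del := Rmin d1 (Rmin d2 d3)).
  assert (hdel : 0 < del) by (unfold del; repeat apply Rmin_glb_lt; auto).
  assert (del <= d1 /\ del <= d2 /\ del <= d3).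
  { unfold del. split. apply Rmin_l. split. eapply Rle_trans. apply Rmin_r. apply Rmin_l.
    eapply Rle_trans. apply Rmin_r. apply Rmin_r. }
  assert (hA : A (ts + del / 2)).
  { split. lra. intros th hth. destruct (Rle_lt_dec th ts).
    - apply hPts. lra.
    - assert (Rabs (th - ts) < del) by (rewrite Rabs_right; lra).
      split; [apply H1|split; [apply H2 | apply H3]]; lra. }
  specialize (hub _ hA). lra.
Qed.
Lemma allpos t : -tau <= t -> 0 < T t /\ 0 < I t /\ 0 < V t.
Proof. intros. apply (positivity (Rabs t)). apply Rabs_pos.
  split; auto. apply Rle_abs. Qed.

Lemma LL_mono u v : 0 <= u -> u <= v ->
  exists c0, u <= c0 <= v /\ LL v <= LL u - (v - u) * QQ c0.
Proof. intros. apply (LL_dec (v + 1)); auto. apply positivity; lra. lra. Qed.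

Lemma LL_le_L0 t : 0 <= t -> LL t <= LL 0.
Proof. intros. apply (LL_le0 (t + 1)). apply positivity; lra. lra. Qed.

Definition kV := B2 / (p * I2).
Lemma kV_pos : 0 < kV. Proof. unfold kV. pose proof B2_pos. pos. Qed.

Definition MT := 2 * (LL 0 + T2).
Definition MI := 2 * (LL 0 + I2).
Definition MV := 2 * (LL 0 / kV + V2).

Lemma bounds t : 0 <= t -> T t <= MT /\ I t <= MI /\ V t <= MV.
Proof.
  intros ht. assert (hP : Pos (t + 1)) by (apply positivity; lra).
  destruct (hP t ltac:(lra)) as [pT [pI pV]].
  destruct (LL_bounds (t+1) t hP ltac:(lra)) as [h1 [h2 [h3 h4]]].
  pose proof (LL_le_L0 t ht). pose proof kV_pos.
  split; [|split].
  - apply hh_upper; auto; lra.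
  - apply hh_upper; auto; lra.
  - apply hh_upper; auto. apply Rmult_le_reg_l with kV; auto.
    replace (kV * (LL 0 / kV)) with (LL 0) by (field; lra). fold kV in h3. lra.
Qed.

Lemma lip (X dX : R -> R) t0 Bd : 0 <= t0 ->
  (forall x, t0 < x -> is_derive X x (dX x)) -> (forall x, continuous X x) ->
  (forall x, t0 <= x -> Rabs (dX x) <= Bd) ->
  forall u v, t0 <= u -> t0 <= v -> Rabs (X v - X u) <= Bd * Rabs (v - u).
Proof.
  intros h0 hder hcont hB u v hu hv.
  destruct (MVT_gen X u v dX) as [c0 [hc0 heq]].
  - intros x hx. apply hder. assert (Rmin u v >= t0) by (unfold Rmin; destruct (Rle_dec u v); lra). lra.
  - intros x hx. apply continuity_pt_filterlim. apply hcont.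
  - rewrite heq, Rabs_mult. apply Rmult_le_compat_r. apply Rabs_pos. apply hB.
    assert (Rmin u v >= t0) by (unfold Rmin; destruct (Rle_dec u v); lra). lra.
Qed.

Lemma frac_range x y : 0 < x -> 0 < y -> x <= MT -> y <= MV ->
  0 <= b * x * y / (1 + al * y) <= b * MT * MV.
Proof.
  intros. split. left; pos.
  assert (b * x * y / (1 + al * y) <= b * x * y).
  { unfold Rdiv. rewrite <- (Rmult_1_r (b * x * y)) at 2. apply Rmult_le_compat_l. left; pos.
    rewrite <- Rinv_1. apply Rinv_le_contravar. lra. nra. }
  assert (b * x * y <= b * MT * MV).
  { apply Rmult_le_compat. left; pos. lra. apply Rmult_le_compat_l; lra. auto. }
  lra.
Qed.

Lemma logi_range x z : 0 < x -> 0 < z -> x <= MT -> z <= MT + MI ->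
  - (a * MT * (MT + MI) / K) <= a * x * (1 - z / K) <= a * MT.
Proof.
  intros. assert (0 <= a * x * z / K) by (left; pos).
  assert (a * x * z / K <= a * MT * (MT + MI) / K).
  { unfold Rdiv. apply Rmult_le_compat_r. left; pos.
    apply Rmult_le_compat. left; pos. lra. apply Rmult_le_compat_l; lra. auto. }
  assert (a * x * (1 - z / K) = a * x - a * x * z / K) by (field; lra).
  assert (a * x <= a * MT) by (apply Rmult_le_compat_l; lra).
  split; nra.
Qed.

Lemma conv_gen (X : R -> R) X2' dX Bd kap :
  (forall x, tau < x -> is_derive X x (dX x)) -> (forall x, continuous X x) ->
  (forall x, tau <= x -> Rabs (dX x) <= Bd) -> 0 < Bd -> 0 < kap ->
  (forall x, 0 <= x -> kap * (X x - X2')^2 <= QQ x) ->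
  forall eps, 0 < eps -> exists M, forall t, M <= t -> Rabs (X t - X2') < eps.
Proof.
  intros hder hcont hB hBd hk hQ.
  apply (barbalat LL X tau X2' Bd kap hBd hk).
  - intros t ht. assert (hP : Pos (t+1)) by (apply positivity; lra).
    apply (LL_bounds (t+1) t hP). lra.
  - intros u v huv. destruct (LL_mono u v ltac:(lra) ltac:(lra)) as [c0 [hc0 h]].
    exists c0. split; auto. specialize (hQ c0 ltac:(lra)).
    assert ((v - u) * (kap * (X c0 - X2')^2) <= (v - u) * QQ c0) by (apply Rmult_le_compat_l; lra).
    lra.
  - apply (lip X dX tau Bd htau hder hcont hB).
Qed.

Lemma MT_pos : 0 < MT.
Proof. unfold MT. pose proof (LL_bounds 1 0 (positivity 1 ltac:(lra)) ltac:(lra)). lra. Qed.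
Lemma MI_pos : 0 < MI.
Proof. unfold MI. pose proof (LL_bounds 1 0 (positivity 1 ltac:(lra)) ltac:(lra)). lra. Qed.
Lemma MV_pos : 0 < MV.
Proof. unfold MV. pose proof (LL_bounds 1 0 (positivity 1 ltac:(lra)) ltac:(lra)).
  pose proof kV_pos. assert (0 <= LL 0 / kV) by (apply Rmult_le_pos; [lra| left; pos]). lra. Qed.

Lemma conv_T : forall eps, 0 < eps -> exists M, forall t, M <= t -> Rabs (T t - T2) < eps.
Proof.
  pose proof MT_pos. pose proof MI_pos. pose proof MV_pos.
  apply (conv_gen T T2 (fun x => fT s d a K b al (T x) (I x) (V x))
    (s + d * MT + a * MT + a * MT * (MT + MI) / K + b * MT * MV) (s / (MT * (T2 + I2)))).
  - intros x hx. apply hsol. lra.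
  - apply cT.
  - intros x hx. destruct (allpos x ltac:(lra)) as [pT [pI pV]].
    destruct (bounds x ltac:(lra)) as [bT [bI bV]].
    pose proof (frac_range (T x) (V x) pT pV bT bV).
    pose proof (logi_range (T x) (T x + I x) pT ltac:(lra) bT ltac:(lra)).
    assert (0 <= d * T x <= d * MT) by (split; [left; pos | apply Rmult_le_compat_l; lra]).
    unfold fT. apply Rabs_le.
    set (u1 := a * T x * (1 - (T x + I x) / K)) in *. set (u2 := b * T x * V x / (1 + al * V x)) in *.
    set (u3 := a * MT * (MT + MI) / K) in *. set (u4 := b * MT * MV) in *. set (u5 := d * T x) in *.
    set (u6 := d * MT) in *. assert (0 <= a * MT) by (left; pos). assert (0 <= u3) by (unfold u3; left; pos). lra.
  - assert (0 < a * MT * (MT + MI) / K) by pos. assert (0 < b * MT * MV) by pos.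
    assert (0 < d * MT) by pos. assert (0 < a * MT) by pos. lra.
  - pos.
  - intros x hx. destruct (allpos x ltac:(lra)) as [pT [pI pV]].
    destruct (bounds x ltac:(lra)) as [bT [bI bV]].
    unfold QQ. pose proof B2_pos.
    assert (0 <= a / K * (T x + I x - T2 - I2) ^ 2) by (apply Rmult_le_pos; [left; pos| apply pow2_ge_0]).
    assert (0 <= B2 * al * (V x - V2) ^ 2 / (V2 * (1 + al * V x) * (1 + al * V2))).
    { unfold Rdiv. apply Rmult_le_pos. apply Rmult_le_pos. left; pos. apply pow2_ge_0. left; pos. }
    assert (s / (MT * (T2 + I2)) <= s / (T x * (T2 + I2))).
    { unfold Rdiv. apply Rmult_le_compat_l. lra. apply Rinv_le_contravar. pos.
      apply Rmult_le_compat_r; lra. }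
    assert (s / (MT * (T2 + I2)) * (T x - T2) ^ 2 <= s / (T x * (T2 + I2)) * (T x - T2) ^ 2).
    { apply Rmult_le_compat_r. apply pow2_ge_0. auto. }
    lra.
Qed.

Lemma conv_N : forall eps, 0 < eps -> exists M, forall t, M <= t -> Rabs ((T t + I t) - (T2 + I2)) < eps.
Proof.
  pose proof MT_pos. pose proof MI_pos. pose proof MV_pos.
  apply (conv_gen (fun t => T t + I t) (T2 + I2)
    (fun x => fT s d a K b al (T x) (I x) (V x) + fI a K b al d (T (x - tau)) (V (x - tau)) (T x) (I x))
    ((s + d * MT + a * MT + a * MT * (MT + MI) / K + b * MT * MV)
     + (b * MT * MV + a * MI + a * MI * (MT + MI) / K + d * MI)) (a / K)).
  - intros x hx. destruct (proj2 hsol x ltac:(lra)) as [h1 [h2 _]].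
    apply (is_derive_plus T I); auto.
  - intros x. apply (continuous_plus T I). apply cT. apply cI.
  - intros x hx. destruct (allpos x ltac:(lra)) as [pT [pI pV]].
    destruct (bounds x ltac:(lra)) as [bT [bI bV]].
    destruct (allpos (x - tau) ltac:(lra)) as [pTd [pId pVd]].
    destruct (bounds (x - tau) ltac:(lra)) as [bTd [bId bVd]].
    pose proof (frac_range (T x) (V x) pT pV bT bV).
    pose proof (frac_range (T (x - tau)) (V (x - tau)) pTd pVd bTd bVd).
    pose proof (logi_range (T x) (T x + I x) pT ltac:(lra) bT ltac:(lra)).
    assert (- (a * MI * (MT + MI) / K) <= a * I x * (1 - (T x + I x) / K) <= a * MI).
    { assert (0 <= a * I x * (T x + I x) / K) by (left; pos).
      assert (a * I x * (T x + I x) / K <= a * MI * (MT + MI) / K).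
      { unfold Rdiv. apply Rmult_le_compat_r. left; pos.
        apply Rmult_le_compat. left; pos. lra. apply Rmult_le_compat_l; lra. lra. }
      assert (a * I x * (1 - (T x + I x) / K) = a * I x - a * I x * (T x + I x) / K) by (field; lra).
      assert (a * I x <= a * MI) by (apply Rmult_le_compat_l; lra).
      split; nra. }
    assert (0 <= d * T x <= d * MT) by (split; [left; pos | apply Rmult_le_compat_l; lra]).
    assert (0 <= d * I x <= d * MI) by (split; [left; pos | apply Rmult_le_compat_l; lra]).
    unfold fT, fI. apply Rabs_le.
    set (u1 := a * T x * (1 - (T x + I x) / K)) in *. set (u2 := b * T x * V x / (1 + al * V x)) in *.
    set (u3 := a * MT * (MT + MI) / K) in *. set (u4 := b * MT * MV) in *. set (u5 := d * T x) in *.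
    set (u6 := d * MT) in *. assert (0 <= a * MT) by (left; pos). assert (0 <= u3) by (unfold u3; left; pos).
    set (w1 := a * I x * (1 - (T x + I x) / K)) in *. set (w2 := b * T (x - tau) * V (x - tau) / (1 + al * V (x - tau))) in *.
    set (w3 := a * MI * (MT + MI) / K) in *. set (w5 := d * I x) in *. set (w6 := d * MI) in *. assert (0 <= w3) by (unfold w3; left; pos). assert (0 <= a * MI) by (left; pos). lra.
  - assert (0 < a * MT * (MT + MI) / K) by pos. assert (0 < b * MT * MV) by pos.
    assert (0 < d * MT) by pos. assert (0 < a * MT) by pos. 
    assert (0 < a * MI * (MT + MI) / K) by pos. assert (0 < d * MI) by pos. assert (0 < a * MI) by pos. lra.
  - pos.
  - intros x hx. destruct (allpos x ltac:(lra)) as [pT [pI pV]].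
    unfold QQ. pose proof B2_pos.
    assert (0 <= s / (T x * (T2 + I2)) * (T x - T2) ^ 2) by (apply Rmult_le_pos; [left; pos| apply pow2_ge_0]).
    assert (0 <= B2 * al * (V x - V2) ^ 2 / (V2 * (1 + al * V x) * (1 + al * V2))).
    { unfold Rdiv. apply Rmult_le_pos. apply Rmult_le_pos. left; pos. apply pow2_ge_0. left; pos. }
    replace (T x + I x - (T2 + I2)) with (T x + I x - T2 - I2) by ring. lra.
Qed.

Lemma conv_V : forall eps, 0 < eps -> exists M, forall t, M <= t -> Rabs (V t - V2) < eps.
Proof.
  pose proof MT_pos. pose proof MI_pos. pose proof MV_pos. pose proof B2_pos.
  apply (conv_gen V V2 (fun x => fV p c (I x) (V x)) (p * MI + c * MV)
    (B2 * al / (V2 * (1 + al * MV) * (1 + al * V2)))).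
  - intros x hx. apply hsol. lra.
  - apply cV.
  - intros x hx. destruct (allpos x ltac:(lra)) as [pT [pI pV]].
    destruct (bounds x ltac:(lra)) as [bT [bI bV]].
    assert (0 <= p * I x <= p * MI) by (split; [left; pos | apply Rmult_le_compat_l; lra]).
    assert (0 <= c * V x <= c * MV) by (split; [left; pos | apply Rmult_le_compat_l; lra]).
    unfold fV. apply Rabs_le.
    set (u1 := p * I x) in *. set (u2 := c * V x) in *. lra.
  - pos.
  - pos.
  - intros x hx. destruct (allpos x ltac:(lra)) as [pT [pI pV]].
    destruct (bounds x ltac:(lra)) as [bT [bI bV]].
    unfold QQ.
    assert (0 <= s / (T x * (T2 + I2)) * (T x - T2) ^ 2) by (apply Rmult_le_pos; [left; pos| apply pow2_ge_0]).
    assert (0 <= a / K * (T x + I x - T2 - I2) ^ 2) by (apply Rmult_le_pos; [left; pos| apply pow2_ge_0]).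
    assert (B2 * al / (V2 * (1 + al * MV) * (1 + al * V2)) * (V x - V2) ^ 2 <=
            B2 * al * (V x - V2) ^ 2 / (V2 * (1 + al * V x) * (1 + al * V2))).
    { unfold Rdiv. rewrite Rmult_assoc, (Rmult_comm (/ _)), <- Rmult_assoc.
      apply Rmult_le_compat_l. apply Rmult_le_pos. left; pos. apply pow2_ge_0.
      apply Rinv_le_contravar. pos. apply Rmult_le_compat_r. left; pos. apply Rmult_le_compat_l. lra.
      nra. }
    lra.
Qed.
Definition Cr := ((1 + al * V2) * V2 + T2 + (1 + al * V2)) / (T2 * V2).
Definition del0 := Rmin 1 (Rmin (T2/2) (Rmin (I2/2) (Rmin (V2/2) (1/(2*Cr))))).
Definition Kc := 2/T2 + 2/I2 + kV*(2/V2) + B2*(tau*(2*Cr^2)).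

Lemma Cr_pos : 0 < Cr. Proof. unfold Cr. pos. Qed.

Lemma del0_props : 0 < del0 /\ del0 <= 1 /\ del0 <= T2/2 /\ del0 <= I2/2 /\ del0 <= V2/2 /\ del0 <= 1/(2*Cr).
Proof.
  pose proof Cr_pos. unfold del0.
  repeat split.
  - repeat apply Rmin_glb_lt; pos.
  - apply Rmin_l.
  - eapply Rle_trans. apply Rmin_r. apply Rmin_l.
  - eapply Rle_trans. apply Rmin_r. eapply Rle_trans. apply Rmin_r. apply Rmin_l.
  - eapply Rle_trans. apply Rmin_r. eapply Rle_trans. apply Rmin_r. eapply Rle_trans. apply Rmin_r. apply Rmin_l.
  - eapply Rle_trans. apply Rmin_r. eapply Rle_trans. apply Rmin_r. eapply Rle_trans. apply Rmin_r. apply Rmin_r.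
Qed.

Lemma sq_le x y del : 0 <= del <= 1 -> Rabs (x - y) <= del -> (x - y)^2 <= del.
Proof.
  intros hdl h. rewrite <- pow2_abs. apply Rle_trans with (del ^ 2).
  apply pow_incr. split. apply Rabs_pos. auto. simpl. nra.
Qed.

Lemma hh_small' x2 x del : 0 < x2 -> 0 <= del <= 1 -> del <= x2 / 2 -> Rabs (x - x2) <= del ->
  hh x2 x <= 2 / x2 * del.
Proof.
  intros h2 hdl hd2 h. pose proof (hh_small x2 x h2 ltac:(lra)).
  pose proof (sq_le x x2 del hdl h).
  assert (2 * (x - x2) ^ 2 / x2 <= 2 / x2 * del).
  { replace (2 * (x - x2) ^ 2 / x2) with (2 / x2 * (x - x2) ^ 2) by (field; lra).
    apply Rmult_le_compat_l. left; pos. lra. }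
  lra.
Qed.

Lemma stab_sec del : 0 < del <= del0 ->
  (forall th, -tau <= th <= 0 -> Rabs (T th - T2) <= del /\ Rabs (I th - I2) <= del /\ Rabs (V th - V2) <= del) ->
  LL 0 <= Kc * del.
Proof.
  intros hdel hclose. destruct del0_props as [h0 [h1 [h2 [h3 [h4 h5]]]]].
  pose proof Cr_pos. pose proof B2_pos. pose proof kV_pos.
  destruct (hclose 0 ltac:(lra)) as [c1 [c2 c3]].
  pose proof (hh_small' T2 (T 0) del hT2 ltac:(lra) ltac:(lra) c1).
  pose proof (hh_small' I2 (I 0) del hI2 ltac:(lra) ltac:(lra) c2).
  pose proof (hh_small' V2 (V 0) del hV2 ltac:(lra) ltac:(lra) c3).
  assert (hP : Pos 1) by (apply positivity; lra).
  assert (hW : GG 0 - GG (0 - tau) <= tau * (2 * Cr ^ 2) * del).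
  { unfold GG. replace (0 - tau) with (- tau) by ring.
    rewrite RInt_point. change zero with 0. rewrite Rminus_0_r.
    assert (hgb : forall th, -tau < th < 0 -> gg th <= 2 * Cr^2 * del).
    { intros th hth. rewrite gg_eq by lra.
      destruct (allpos th ltac:(lra)) as [pT [pI pV]].
      destruct (hclose th ltac:(lra)) as [e1 [e2 e3]].
      pose proof (rho_bound b al T2 V2 (T th) (V th) del hb hal hT2 hV2 pV ltac:(lra) e1 e3) as hr.
      fold Cr in hr. unfold beta, B2.
      set (rho := b * T th * V th / (1 + al * V th) / (b * T2 * V2 / (1 + al * V2))) in *.
      assert (Cr * del <= 1/2).
      { apply Rle_trans with (Cr * (1 / (2 * Cr))). apply Rmult_le_compat_l; lra.
        right. field. lra. }
      apply Rabs_le_between in hr.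
      assert (hrho : 1/2 <= rho) by lra.
      pose proof (phi_le rho ltac:(lra)).
      assert ((rho - 1)^2 / rho <= 2 * (rho - 1)^2).
      { unfold Rdiv. apply Rle_trans with ((rho - 1)^2 * 2). apply Rmult_le_compat_l. apply pow2_ge_0.
        replace 2 with (/ (1/2)) by field. apply Rinv_le_contravar; lra. lra. }
      assert ((rho - 1)^2 <= (Cr * del)^2).
      { rewrite <- pow2_abs. apply pow_incr. split. apply Rabs_pos. apply Rabs_le. lra. }
      assert ((Cr * del)^2 <= Cr^2 * del).
      { replace ((Cr * del)^2) with (Cr^2 * (del * del)) by ring. apply Rmult_le_compat_l.
        apply pow2_ge_0. nra. }
      lra. }
    apply Rle_trans with (RInt (fun _ => 2 * Cr ^ 2 * del) (-tau) 0).
    - apply RInt_le. lra. apply (ex_RInt_gg 1); auto; lra. apply ex_RInt_const. exact hgb.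
    - rewrite RInt_const. unfold scal; simpl; unfold mult; simpl. right; ring. }
  unfold LL, Kc. fold kV.
  assert (kV * hh V2 (V 0) <= kV * (2 / V2 * del)) by (apply Rmult_le_compat_l; lra).
  assert (B2 * (GG 0 - GG (0 - tau)) <= B2 * (tau * (2 * Cr ^ 2) * del)) by (apply Rmult_le_compat_l; lra).
  replace ((2 / T2 + 2 / I2 + kV * (2 / V2) + B2 * (tau * (2 * Cr ^ 2))) * del) with
    (2 / T2 * del + 2 / I2 * del + kV * (2 / V2 * del) + B2 * (tau * (2 * Cr ^ 2) * del)) by ring.
  lra.
Qed.
End Sol.
Lemma lim_of_eps (f : R -> R) (l : R) :
  (forall eps, 0 < eps -> exists M, forall t, M <= t -> Rabs (f t - l) < eps) ->
  is_lim f p_infty l.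
Proof.
  intros H. apply is_lim_spec. intros eps. destruct (H eps (cond_pos eps)) as [M hM].
  exists M. intros x hx. apply hM. lra.
Qed.

Lemma eq_rel s d a K b al p c T2 I2 V2 : 0 < s -> 0 < T2 -> 0 < I2 -> 0 < V2 -> 0 < al -> 0 < c -> 0 < K ->
  is_equilibrium s d a K b al d p c T2 I2 V2 ->
  0 < d - a*(1-(T2+I2)/K) /\ s = (d - a*(1-(T2+I2)/K))*(T2+I2) /\
  b = (d - a*(1-(T2+I2)/K))*I2*(1+al*V2)/(T2*V2) /\ c = p*I2/V2.
Proof.
  intros hs hT2 hI2 hV2 hal hc hK [e1 [e2 e3]]. unfold fT, fI, fV in *.
  assert (hsq : s = (d - a*(1-(T2+I2)/K))*(T2+I2)).
  { assert (s - d * (T2 + I2) + a * (T2 + I2) * (1 - (T2 + I2) / K) = 0) by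
      (replace (s - d * (T2 + I2) + a * (T2 + I2) * (1 - (T2 + I2) / K)) with
        ((s - d * T2 + a * T2 * (1 - (T2 + I2) / K) - b * T2 * V2 / (1 + al * V2)) +
         (b * T2 * V2 / (1 + al * V2) + a * I2 * (1 - (T2 + I2) / K) - d * I2)) by ring; lra).
    replace ((d - a * (1 - (T2 + I2) / K)) * (T2 + I2)) with
      (d * (T2 + I2) - a * (T2 + I2) * (1 - (T2 + I2) / K)) by ring. lra. }
  assert (hq : 0 < d - a*(1-(T2+I2)/K)).
  { apply Rmult_lt_reg_r with (T2 + I2). lra. rewrite Rmult_0_l, <- hsq. auto. }
  repeat split; auto.
  - assert (hbe : b * T2 * V2 / (1 + al * V2) = (d - a*(1-(T2+I2)/K)) * I2).
    { replace ((d - a * (1 - (T2 + I2) / K)) * I2) with (d * I2 - a * I2 * (1 - (T2 + I2) / K)) by ring.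
      lra. }
    replace b with (b * T2 * V2 / (1 + al * V2) * (1 + al * V2) / (T2 * V2)) at 1 by (field; split; pos).
    rewrite hbe. reflexivity.
  - field_simplify_eq. lra. lra.
Qed.

Theorem corollary1 (s d a Tmax b alpha mu p c tau : R)
  (hs : 0 < s) (hd : 0 < d) (ha : 0 < a) (hTmax : 0 < Tmax) (hb : 0 < b)
  (halpha : 0 < alpha) (hmu : 0 < mu) (hp : 0 < p) (hc : 0 < c) (htau : 0 <= tau)
  (hdmu : d = mu) (hR0 : 1 < basic_R0 s d a Tmax b mu p c) :
  exists T2 I2 V2 : R,
    0 < T2 /\ 0 < I2 /\ 0 < V2 /\
    is_equilibrium s d a Tmax b alpha mu p c T2 I2 V2 /\
    (forall T' I' V' : R, 0 < T' -> 0 < I' -> 0 < V' ->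
       is_equilibrium s d a Tmax b alpha mu p c T' I' V' ->
       T' = T2 /\ I' = I2 /\ V' = V2) /\
    globally_asymptotically_stable s d a Tmax b alpha mu p c tau T2 I2 V2.
Proof.
  subst mu. rename Tmax into K. rename alpha into al.
  destruct (T0_props s d a K hs ha hTmax) as [ht0 hquad].
  pose proof (fun N hN hqN => T0_unique s d a K N hs ha hTmax hN hqN) as hu.
  unfold basic_R0 in hR0.
  set (t0 := T0 s d a K) in *. clearbody t0.
  assert (hR : d < b * p * t0 / c + a * (1 - t0 / K)).
  { apply Rmult_lt_compat_l with (r := d) in hR0; auto.
    rewrite Rmult_1_r, <- Rmult_assoc, Rinv_r, Rmult_1_l in hR0 by lra. exact hR0. }
  assert (hsub : s = d * t0 - a * t0 * (1 - t0 / K)) by lra.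
  assert (hsc : s * c < b * p * t0 * t0).
  { assert (a * (1 - t0 / K) = d - s / t0) by (rewrite hsub; field; lra).
    rewrite H in hR. assert (s / t0 < b * p * t0 / c) by lra.
    apply (Rmult_lt_compat_r (t0 * c)) in H0; [|pos].
    replace (s / t0 * (t0 * c)) with (s * c) in H0 by (field; lra).
    replace (b * p * t0 / c * (t0 * c)) with (b * p * t0 * t0) in H0 by (field; lra). lra. }
  set (I2 := (b * p * t0 * t0 - s * c) / (b * p * t0 + s * al * p)).
  set (T2 := t0 - I2). set (V2 := p * I2 / c).
  assert (hI2 : 0 < I2) by (unfold I2; pos).
  assert (hT2 : 0 < T2).
  { unfold T2, I2. assert ((b * p * t0 * t0 - s * c) / (b * p * t0 + s * al * p) < t0).
    { apply Rmult_lt_reg_r with (b * p * t0 + s * al * p). pos.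
      unfold Rdiv. rewrite Rmult_assoc, Rinv_l by (assert (0 < b * p * t0 + s * al * p) by pos; lra).
      assert (0 < s * c) by pos. assert (0 < t0 * (s * al * p)) by pos. nra. }
    lra. }
  assert (hV2 : 0 < V2) by (unfold V2; pos).
  assert (hE : is_equilibrium s d a K b al d p c T2 I2 V2).
  { unfold is_equilibrium, fT, fI, fV, T2, V2, I2. rewrite hsub.
    assert (0 < b * p * t0 + (d * t0 - a * t0 * (1 - t0 / K)) * al * p) by (rewrite <- hsub; pos).
    split; [|split]; field; repeat split; try lra; try pos.
    all: assert (K * (b * p * t0 + (d * t0 - a * t0 * (1 - t0 / K)) * al * p) =
         b * p * t0 * K + (d * t0 * K - a * t0 * (K - t0)) * al * p) by (field; lra).
    all: assert (0 < K * (b * p * t0 + (d * t0 - a * t0 * (1 - t0 / K)) * al * p)) by pos.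
    all: try lra.
    all: assert (K * (c * (b * p * t0 + (d * t0 - a * t0 * (1 - t0 / K)) * al * p)
                 + al * p * (b * p * t0 * t0 - (d * t0 - a * t0 * (1 - t0 / K)) * c)) =
       (b * p * t0 * K + (d * t0 * K - a * t0 * (K - t0)) * al * p) * c +
       al * (p * (b * p * t0 * t0 * K - (d * t0 * K - a * t0 * (K - t0)) * c))) by (field; lra).
    all: rewrite <- hsub in *.
    all: assert (0 < K * (c * (b * p * t0 + s * al * p) + al * p * (b * p * t0 * t0 - s * c))) by pos.
    all: lra. }
  destruct (eq_rel s d a K b al p c T2 I2 V2 hs hT2 hI2 hV2 halpha hc hTmax hE) as [hq [hsE [hbE hcE]]].
  exists T2, I2, V2. split; [auto|split; [auto|split; [auto|split; [auto|split]]]].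
  - intros T' I' V' hT' hI' hV' [e1 [e2 e3]]. unfold fT, fI, fV in e1, e2, e3.
    assert (hN : T' + I' = t0).
    { apply hu. lra.
      replace (s - d * (T' + I') + a * (T' + I') * (1 - (T' + I') / K)) with
        ((s - d * T' + a * T' * (1 - (T' + I') / K) - b * T' * V' / (1 + al * V')) +
         (b * T' * V' / (1 + al * V') + a * I' * (1 - (T' + I') / K) - d * I')) by ring. lra. }
    assert (hVeq : V' = p * I' / c) by (field_simplify_eq; lra).
    assert (hT'' : T' = t0 - I') by lra.
    assert (Hid : (b * T' * V' / (1 + al * V') + a * I' * (1 - (T' + I') / K) - d * I') * (t0 * (c + al * p * I'))
       = I' * (b * p * t0 * (t0 - I') - s * (c + al * p * I'))).
    { rewrite hT'', hVeq. rewrite hsub. field. split; [|split]; try lra.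
      all: assert (0 < c + al * p * I') by pos.
      all: try lra. }
    rewrite e2, Rmult_0_l in Hid.
    assert (hbr : b * p * t0 * (t0 - I') - s * (c + al * p * I') = 0).
    { symmetry in Hid. apply Rmult_integral in Hid. destruct Hid; [lra | auto]. }
    assert (hI'eq : I' = I2).
    { unfold I2. assert (0 < b * p * t0 + s * al * p) by pos.
      apply (Rmult_eq_reg_r (b * p * t0 + s * al * p)); [|lra].
      replace ((b * p * t0 * t0 - s * c) / (b * p * t0 + s * al * p) * (b * p * t0 + s * al * p))
        with (b * p * t0 * t0 - s * c) by (field; lra). lra. }
    split; [|split].
    + unfold T2. lra.
    + auto.
    + unfold V2. rewrite hVeq, hI'eq. reflexivity.
  - split.
    +
      intros eps heps.
      destruct (hh_close T2 eps hT2 heps) as [eT [heT HT]].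
      destruct (hh_close I2 eps hI2 heps) as [eI [heI HI]].
      destruct (hh_close V2 eps hV2 heps) as [eV [heV HV]].
      set (k := kV b al p T2 I2 V2).
      assert (hk : 0 < k) by (unfold k; apply (kV_pos b al p hb halpha hp T2 I2 V2 hT2 hI2 hV2)).
      set (eta := Rmin eT (Rmin eI (k * eV))).
      assert (heta : 0 < eta) by (unfold eta; repeat apply Rmin_glb_lt; pos).
      assert (heta1 : eta <= eT /\ eta <= eI /\ eta <= k * eV).
      { unfold eta. split. apply Rmin_l. split. eapply Rle_trans. apply Rmin_r. apply Rmin_l.
        eapply Rle_trans. apply Rmin_r. apply Rmin_r. }
      set (KK := Kc b al p tau T2 I2 V2).
      assert (hKK : 0 < KK).
      { unfold KK, Kc. fold k. assert (0 < B2 b al T2 V2) by (apply (B2_pos b al hb halpha T2 V2 hT2 hV2)).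
        assert (0 <= tau * (2 * Cr al T2 V2 ^ 2)) by (apply Rmult_le_pos; [lra | apply Rmult_le_pos; [lra | apply pow2_ge_0]]).
        assert (0 <= B2 b al T2 V2 * (tau * (2 * Cr al T2 V2 ^ 2))) by (apply Rmult_le_pos; lra).
        assert (0 < 2 / T2) by pos. assert (0 < 2 / I2) by pos. assert (0 < k * (2 / V2)) by pos. lra. }
      assert (hd0 : 0 < del0 al T2 I2 V2) by (eapply del0_props; eauto).
      exists (Rmin (del0 al T2 I2 V2) (eta / (KK + 1))). split.
      { apply Rmin_glb_lt; pos. }
      intros T I V hsol hini hclose t ht.
      set (del := Rmin (del0 al T2 I2 V2) (eta / (KK + 1))) in *.
      assert (hdel : 0 < del) by (unfold del; apply Rmin_glb_lt; pos).
      assert (hL0 : LL b al p tau T2 I2 V2 T I V 0 <= KK * del).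
      { apply (stab_sec s d a K b al p c tau hs ha hTmax hb halpha hp htau T2 I2 V2 hT2 hI2 hV2 hq hsE hbE hcE T I V hsol hini del).
        split; auto. apply Rmin_l.
        intros th hth. specialize (hclose th hth). unfold dist3 in hclose.
        pose proof (Rmax_l (Rabs (T th - T2)) (Rmax (Rabs (I th - I2)) (Rabs (V th - V2)))).
        pose proof (Rmax_r (Rabs (T th - T2)) (Rmax (Rabs (I th - I2)) (Rabs (V th - V2)))).
        pose proof (Rmax_l (Rabs (I th - I2)) (Rabs (V th - V2))).
        pose proof (Rmax_r (Rabs (I th - I2)) (Rabs (V th - V2))).
        split; [|split]; lra. }
      assert (hKd : KK * del < eta).
      { apply Rle_lt_trans with (KK * (eta / (KK + 1))). apply Rmult_le_compat_l. lra. apply Rmin_r.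
        apply Rmult_lt_reg_r with (KK + 1). lra.
        replace (KK * (eta / (KK + 1)) * (KK + 1)) with (KK * eta) by (field; lra). nra. }
      assert (hLt : LL b al p tau T2 I2 V2 T I V t <= LL b al p tau T2 I2 V2 T I V 0) by (apply (LL_le_L0 s d a K b al p c tau hs ha hTmax hb halpha hp htau T2 I2 V2 hT2 hI2 hV2 hq hsE hbE hcE T I V hsol hini t ht)).
      assert (hP : Pos tau T I V (t + 1)) by (apply (positivity s d a K b al p c tau hs ha hTmax hb halpha hp htau T2 I2 V2 hT2 hI2 hV2 hq hsE hbE hcE T I V hsol hini); lra).
      destruct (hP t ltac:(lra)) as [pT [pI pV]].
      destruct (LL_bounds s d a K b al p c tau hb halpha hp htau T2 I2 V2 hT2 hI2 hV2 T I V hsol (t+1) t hP ltac:(lra)) as [b1 [b2 [b3 b4]]].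
      assert (hkk : B2 b al T2 V2 / (p * I2) = k) by reflexivity. rewrite hkk in b3.
      unfold dist3. apply Rmax_lub_lt; [|apply Rmax_lub_lt].
      * apply HT; auto. lra.
      * apply HI; auto. lra.
      * apply HV; auto. apply Rmult_lt_reg_l with k; auto. lra.
    +
      intros T I V hsol hini.
      assert (cT' : forall eps, 0 < eps -> exists M, forall t, M <= t -> Rabs (T t - T2) < eps)
        by (apply (conv_T s d a K b al p c tau hs hd ha hTmax hb halpha hp htau T2 I2 V2 hT2 hI2 hV2 hq hsE hbE hcE T I V hsol hini)).
      assert (cN' : forall eps, 0 < eps -> exists M, forall t, M <= t -> Rabs ((T t + I t) - (T2 + I2)) < eps)
        by (apply (conv_N s d a K b al p c tau hs hd ha hTmax hb halpha hp htau T2 I2 V2 hT2 hI2 hV2 hq hsE hbE hcE T I V hsol hini)).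
      assert (cV' : forall eps, 0 < eps -> exists M, forall t, M <= t -> Rabs (V t - V2) < eps)
        by (apply (conv_V s d a K b al p c tau hs ha hTmax hb halpha hp hc htau T2 I2 V2 hT2 hI2 hV2 hq hsE hbE hcE T I V hsol hini)).
      split; [|split]; apply lim_of_eps; auto.
      intros eps heps.
      destruct (cT' (eps/2) ltac:(lra)) as [M1 h1]. destruct (cN' (eps/2) ltac:(lra)) as [M2 h2].
      exists (Rmax M1 M2). intros t ht.
      specialize (h1 t ltac:(pose proof (Rmax_l M1 M2); lra)).
      specialize (h2 t ltac:(pose proof (Rmax_r M1 M2); lra)).
      replace (I t - I2) with ((T t + I t - (T2 + I2)) - (T t - T2)) by ring.
      eapply Rle_lt_trans. apply Rabs_triang. rewrite Rabs_Ropp. lra.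
Qed.
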